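(* Let $p\ge3$. Let $\mathfrak{S}=\mathbb{Z}_p[[\lambda]]$ with $\delta$-structure determined by $\varphi(\lambda)=(\lambda+p)^p-p$, and let $\iota\colon\mathfrak{S}\to W(\mathbb{Z}_p)$ be the unique $\delta$-ring map lifting the quotient map $\mathfrak{S}\to\mathfrak{S}/\lambda=\mathbb{Z}_p$. Then there exists a unit $x_\lambda\in W(\mathbb{Z}_p)^\times$ such that $\iota(\lambda)=V(F(x_\lambda))$, where $F$ and $V$ are the Witt vector Frobenius and Verschiebung.
   Context: $W(\mathbb{Z}_p)$ denotes the ring of $p$-typical Witt vectors of $\mathbb{Z}_p$, with its canonical $\delta$-ring structure. *)

(* Defs.v *)
From mathcomp Require Import all_boot all_algebra.
Set Implicit Arguments. Unset Strict Implicit. Unset Printing Implicit Defensive.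
Import GRing.Theory Num.Theory.
Local Open Scope ring_scope.

(* An element is a sequence x : nat -> int, x n representing a class mod p^n;
   coherence: x (n+1) = x n mod p^n.  Equality is congruence at every level. *)
Definition Zp := nat -> int.
Definition Zp_coh (p : nat) (x : Zp) : Prop :=
  forall n, (x n.+1 = x n %[mod (p ^ n)%N%:Z])%Z.
Definition Zp_eq (p : nat) (x y : Zp) : Prop :=
  forall n, (x n = y n %[mod (p ^ n)%N%:Z])%Z.
Definition Zp_cst (c : int) : Zp := fun _ => c.
Definition Zp_add (x y : Zp) : Zp := fun m => x m + y m.
Definition Zp_opp (x : Zp) : Zp := fun m => - x m.
Definition Zp_mul (x y : Zp) : Zp := fun m => x m * y m.
Definition Zp_exp (x : Zp) (k : nat) : Zp := fun m => x m ^+ k.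

(* A Witt vector is its sequence of Witt coordinates (a_0, a_1, ...) in Z_p. *)
Definition Witt := nat -> Zp.
Definition W_wf (p : nat) (a : Witt) : Prop := forall i, Zp_coh p (a i).
Definition W_eq (p : nat) (a b : Witt) : Prop := forall i, Zp_eq p (a i) (b i).

Definition ghost (p n : nat) (a : Witt) : Zp :=
  fun m => \sum_(i < n.+1) (p ^ i)%N%:Z * (a i m) ^+ (p ^ (n - i)).

(* Since Z_p is p-torsion free, the ghost map W(Z_p) -> Z_p^N is injective and
   the Witt ring operations / Frobenius are the unique ones compatible with the
   ghost map (this is how the universal Witt polynomials are characterized).
   We therefore express them as relations through ghost components. *)
Definition W_is_add (p : nat) (a b c : Witt) : Prop :=
  forall n, Zp_eq p (ghost p n c) (Zp_add (ghost p n a) (ghost p n b)).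
Definition W_is_mul (p : nat) (a b c : Witt) : Prop :=
  forall n, Zp_eq p (ghost p n c) (Zp_mul (ghost p n a) (ghost p n b)).
Definition W_one : Witt := fun i => Zp_cst (if i == 0%N then 1 else 0).
Definition W_is_unit (p : nat) (a : Witt) : Prop :=
  exists b, W_wf p b /\ W_is_mul p a b W_one.
Definition W_is_frob (p : nat) (a b : Witt) : Prop :=
  forall n, Zp_eq p (ghost p n b) (ghost p n.+1 a).
Definition verschiebung (a : Witt) : Witt :=
  fun i => if i is j.+1 then a j else Zp_cst 0.
(* d = delta(a) for the canonical delta-structure: F(a) = a^p + p delta(a) *)
Definition W_is_delta (p : nat) (a d : Witt) : Prop :=
  forall n, Zp_eq p (Zp_mul (Zp_cst p%:Z) (ghost p n d))
                    (Zp_add (ghost p n.+1 a) (Zp_opp (Zp_exp (ghost p n a) p))).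

Definition PS := nat -> Zp.
Definition PS_wf (p : nat) (f : PS) : Prop := forall k, Zp_coh p (f k).
Definition PS_eq (p : nat) (f g : PS) : Prop := forall k, Zp_eq p (f k) (g k).
Definition PS_add (f g : PS) : PS := fun k => Zp_add (f k) (g k).
Definition PS_mul (f g : PS) : PS :=
  fun k m => \sum_(i < k.+1) f i m * g (k - i)%N m.
Definition PS_one : PS := fun k => Zp_cst (if k == 0%N then 1 else 0).
Definition PS_exp (f : PS) (n : nat) : PS := iter n (PS_mul f) PS_one.
Definition PS_lambda : PS := fun k => Zp_cst (if k == 1%N then 1 else 0).

Definition frob_poly (p : nat) : {poly int} :=
  ('X + (p%:Z)%:P) ^+ p - (p%:Z)%:P.
(* phi(f) = f((lambda+p)^p - p)  (phi is the identity on Z_p).  The substitution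
   converges p-adically: the coefficient of lambda^k in frob_poly^j is divisible
   by p^(j-k), so modulo p^m only the terms j < k + m matter. *)
Definition PS_frob (p : nat) (f : PS) : PS :=
  fun k m => \sum_(j < k + m) f j m * ((frob_poly p ^+ j)`_k).
(* d = delta(f) :  p d = phi(f) - f^p  (S is p-torsion free) *)
Definition PS_is_delta (p : nat) (f d : PS) : Prop :=
  forall k, Zp_eq p (Zp_mul (Zp_cst p%:Z) (d k))
                    (Zp_add (PS_frob p f k) (Zp_opp (PS_exp f p k))).

Definition is_delta_map_lifting (p : nat) (iota : PS -> Witt) : Prop :=
  (forall f, PS_wf p f -> W_wf p (iota f)) /\
  (forall f g, PS_wf p f -> PS_wf p g -> PS_eq p f g -> W_eq p (iota f) (iota g)) /\
  (forall f g, PS_wf p f -> PS_wf p g ->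
      W_is_add p (iota f) (iota g) (iota (PS_add f g))) /\
  (forall f g, PS_wf p f -> PS_wf p g ->
      W_is_mul p (iota f) (iota g) (iota (PS_mul f g))) /\
  W_eq p (iota PS_one) W_one /\
  (forall f d, PS_wf p f -> PS_wf p d -> PS_is_delta p f d ->
      W_is_delta p (iota f) (iota d)) /\
  (forall f, PS_wf p f -> Zp_eq p (iota f 0%N) (f 0%N)).

(* Main.v *)
Require Import Defs.
From mathcomp Require Import all_boot all_algebra ring zify.
Set Implicit Arguments. Unset Strict Implicit. Unset Printing Implicit Defensive.
Import GRing.Theory Num.Theory.
Local Open Scope ring_scope.

Section NT.
Variable p : nat.
Hypothesis hp : prime p.

Lemma dvdpFp (z : int) : (p%:Z %| z)%Z = (z%:~R == 0 :> 'F_p).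
Proof. exact: (dvdz_pcharf (pchar_Fp hp)). Qed.

Lemma Fp_frob (x : 'F_p) : x ^+ p = x.
Proof.
rewrite -[x]natr_Zp.
by rewrite -natrX -Fp_nat_mod // fermat_little // Fp_nat_mod.
Qed.

Lemma fermatz (a : int) : (p%:Z %| a ^+ p - a)%Z.
Proof. by rewrite dvdpFp rmorphB rmorphXn /= Fp_frob subrr. Qed.

Lemma liftp (X Y : int) k : (0 < k)%N -> (p%:Z ^+ k %| X - Y)%Z ->
  (p%:Z ^+ k.+1 %| X ^+ p - Y ^+ p)%Z.
Proof.
move=> k0 h; rewrite subrXX exprSr dvdz_mul //.
have hXY : (X%:~R : 'F_p) = Y%:~R.
  apply/eqP; rewrite -subr_eq0 -rmorphB -dvdpFp.
  apply: dvdz_trans h; have := @dvdz_exp2l (p%:Z) 1 k k0; by rewrite expr1.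
rewrite dvdpFp rmorph_sum /=.
rewrite (eq_bigr (fun _ => (Y%:~R : 'F_p) ^+ p.-1)); last first.
  move=> i _; rewrite rmorphM !rmorphXn /= hXY -exprD; congr (_ ^+ _).
  by rewrite subnK // -ltnS prednK ?prime_gt0.
by rewrite sumr_const card_ord -mulr_natl pchar_Fp_0 // mul0r.
Qed.

Lemma liftpj (X Y : int) k j : (0 < k)%N -> (p%:Z ^+ k %| X - Y)%Z ->
  (p%:Z ^+ (k + j) %| X ^+ (p ^ j) - Y ^+ (p ^ j))%Z.
Proof.
move=> k0 h; elim: j => [|j IH]; first by rewrite addn0 !expr1.
by rewrite addnS expnSr !exprM liftp // addn_gt0 k0.
Qed.

Lemma fermatj (a : int) j : (p%:Z ^+ j.+1 %| a ^+ (p ^ j.+1) - a ^+ (p ^ j))%Z.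
Proof.
by rewrite expnS exprM -add1n liftpj // expr1 fermatz.
Qed.

Local Notation P := (p%:Z).

Lemma pzX i : (p ^ i)%N%:Z = P ^+ i.
Proof. by rewrite -[LHS]natz natrX natz. Qed.

Lemma p_gt0 : (0 < P). Proof. by rewrite ltz_nat prime_gt0. Qed.
Lemma pX_neq0 k : P ^+ k != 0. Proof. by rewrite expf_neq0 // lt0r_neq0 // p_gt0. Qed.

Definition gh (a : nat -> int) n : int :=
  \sum_(i < n.+1) (p ^ i)%N%:Z * (a i) ^+ (p ^ (n - i)).

Fixpoint dws (u : nat -> int) n : seq int :=
  match n with
  | 0 => [:: u 0%N]
  | n'.+1 => let s := dws u n' in
      rcons s ((u n - \sum_(i < n) (p ^ i)%N%:Z * s`_i ^+ (p ^ (n - i))) %/ (p ^ n)%N%:Z)%Z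
  end.

Lemma size_dws u n : size (dws u n) = n.+1.
Proof. by elim: n => //= n IH; rewrite size_rcons IH. Qed.

Lemma nth_dws u n m i : (i <= n)%N -> (n <= m)%N -> (dws u m)`_i = (dws u n)`_i.
Proof.
move=> hin; elim: m => [|m IH]; first by rewrite leqn0 => /eqP ->.
rewrite leq_eqVlt => /orP [/eqP -> //|]; rewrite ltnS => hnm.
by rewrite /= nth_rcons size_dws ltnS (leq_trans hin hnm) IH.
Qed.

Definition dw u i := (dws u i)`_i.

Lemma dw_rec u n : dw u n.+1 =
  ((u n.+1 - \sum_(i < n.+1) (p ^ i)%N%:Z * dw u i ^+ (p ^ (n.+1 - i))) %/ (p ^ n.+1)%N%:Z)%Z.
Proof.
rewrite /dw /= nth_rcons size_dws ltnn eqxx; congr ((_ - _) %/ _)%Z.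
apply: eq_bigr => i _; congr (_ * _ ^+ _).
by rewrite (nth_dws u (leqnn i) (ltn_ord i : (i <= n)%N)).
Qed.

Lemma dvdz_sumX d I (r : seq I) (F : I -> int) :
  (forall i, (d %| F i)%Z) -> (d %| \sum_(i <- r) F i)%Z.
Proof. move=> h; apply: rpred_sum => i _; exact: h. Qed.

Definition Dw (u : nat -> int) := forall n, (P ^+ n.+1 %| u n.+1 - u n)%Z.

Lemma gh_dw u : Dw u -> forall n, gh (dw u) n = u n.
Proof.
move=> hu; elim=> [|n IH].
  by rewrite /gh big_ord1 /= expn0 mul1r expr1 /dw /=.
rewrite /gh big_ord_recr /= subnn expn0 expr1 dw_rec.
set S := \sum_(i < n.+1) _.
rewrite pzX mulrC divzK; first by rewrite addrC subrK.
have -> : u n.+1 - S = (u n.+1 - u n) + (gh (dw u) n - S) by rewrite IH addrA subrK.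
rewrite rpredD // /gh /S -sumrB; apply: rpred_sum => i _.
rewrite -mulrBr pzX.
have hi : (n.+1 - i = (n - i).+1)%N by rewrite subSn // -ltnS.
rewrite hi -opprB mulrN rpredN.
have -> : P ^+ n.+1 = P ^+ i * P ^+ (n - i).+1 by rewrite -exprD addnS subnKC // -ltnS.
by rewrite dvdz_mul2l ?pX_neq0 // fermatj.
Qed.

Lemma gh_split (a : nat -> int) n :
  gh a n = \sum_(i < n) P ^+ i * a i ^+ (p ^ (n - i)) + P ^+ n * a n.
Proof.
by rewrite /gh big_ord_recr /= subnn expn0 expr1 pzX; congr (_ + _);
  apply: eq_bigr => i _; rewrite pzX.
Qed.

Lemma gh_inj (a b : nat -> int) k : (0 < k)%N ->
  (forall n, (P ^+ (k + n) %| gh a n - gh b n)%Z) ->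
  forall n, (P ^+ k %| a n - b n)%Z.
Proof.
move=> k0 h; elim/ltn_ind => n IH.
rewrite -(@dvdz_mul2l (P ^+ n)) ?pX_neq0 // -exprD addnC mulrBr.
have -> : P ^+ n * a n - P ^+ n * b n = (gh a n - gh b n)
   - \sum_(i < n) P ^+ i * (a i ^+ (p ^ (n - i)) - b i ^+ (p ^ (n - i))).
  have -> : \sum_(i < n) P ^+ i * (a i ^+ (p ^ (n - i)) - b i ^+ (p ^ (n - i))) =
     \sum_(i < n) P ^+ i * a i ^+ (p ^ (n - i)) - \sum_(i < n) P ^+ i * b i ^+ (p ^ (n - i)).
    by rewrite -sumrB; apply: eq_bigr => i _; rewrite mulrBr.
  rewrite !gh_split. ring.
rewrite rpredB // ?h //; apply: rpred_sum => i _.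
have -> : P ^+ (k + n) = P ^+ i * P ^+ (k + (n - i)).
  by rewrite -exprD addnCA subnKC // ltnW.
by rewrite dvdz_mul2l ?pX_neq0 // liftpj // IH.
Qed.

Lemma Dw_add u w : Dw u -> Dw w -> Dw (fun n => u n + w n).
Proof.
move=> hu hw n; have -> : u n.+1 + w n.+1 - (u n + w n) = (u n.+1 - u n) + (w n.+1 - w n) by ring.
exact: rpredD.
Qed.

Lemma Dw_opp u : Dw u -> Dw (fun n => - u n).
Proof. by move=> hu n; rewrite -opprD rpredN. Qed.

Lemma Dw_cst c : Dw (fun _ => c).
Proof. by move=> n; rewrite subrr dvdz0. Qed.

Lemma Dw_mul u w : Dw u -> Dw w -> Dw (fun n => u n * w n).
Proof.
move=> hu hw n.
have -> : u n.+1 * w n.+1 - u n * w n = u n.+1 * (w n.+1 - w n) + w n * (u n.+1 - u n) by ring.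
by rewrite rpredD // dvdz_mull.
Qed.

Lemma Dw_exp u k : Dw u -> Dw (fun n => u n ^+ k).
Proof.
move=> hu; elim: k => [|k IH]; first exact: (Dw_cst 1).
by move=> n; have := Dw_mul hu IH n; rewrite /= !exprS.
Qed.

Lemma Dw_sum (F : nat -> nat -> int) K : (forall k, Dw (F k)) ->
  Dw (fun n => \sum_(k < K) F k n).
Proof.
move=> hF; elim: K => [|K IH].
  by move=> n; rewrite !big_ord0 subrr dvdz0.
by move=> n; rewrite !big_ord_recr /=; exact: (Dw_add IH (hF K) n).
Qed.

Hypothesis hp3 : (2 < p)%N.

Lemma pow_ge n : (n.+3 <= p ^ n.+1)%N.
Proof.
elim: n => [|n IH]; first by rewrite expn1.
rewrite expnS; apply: leq_trans (leq_mul hp3 IH); lia.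
Qed.

Definition e n : int := if n is 0 then 0 else P ^+ (p ^ n - 1).
Definition u n : int := e n - 1.
Definition v n : int := u n.+1.
Definition beta m n : int := - \sum_(k < m.+1) e n ^+ k.

Lemma Dw_e : Dw e.
Proof.
case=> [|n] /=.
  have h : (1 <= p ^ 1 - 1)%N by rewrite expn1; lia.
  by have := dvdz_exp2l P h; rewrite expr1 /= subr0.
have h1 := pow_ge n; have h2 := pow_ge n.+1.
by rewrite rpredB // dvdz_exp2l //; lia.
Qed.

Lemma Dw_u : Dw u.
Proof. exact: (Dw_add Dw_e (Dw_cst (-1))). Qed.

Lemma Dw_v : Dw v.
Proof.
move=> n; rewrite /v; apply: dvdz_trans (Dw_u n.+1).
by rewrite dvdz_exp2l.
Qed.

Lemma Dw_beta m : Dw (beta m).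
Proof.
have h := @Dw_sum (fun k n => e n ^+ k) m.+1 (fun k => Dw_exp k Dw_e).
exact: (Dw_opp h).
Qed.

Lemma modP x y m : (x = y %[mod (p ^ m)%N%:Z])%Z <-> (P ^+ m %| x - y)%Z.
Proof.
rewrite pzX -eqz_mod_dvd; split => [->|/eqP //]; exact: eqxx.
Qed.

Definition xW : Witt := fun i => Zp_cst (dw u i).
Definition yW : Witt := fun i => Zp_cst (dw v i).
Definition bW : Witt := fun i m => dw (beta m) i.

Lemma wf_cst (a : nat -> int) : W_wf p (fun i => Zp_cst (a i)).
Proof. by move=> i n. Qed.

Lemma ghost_one n m : ghost p n W_one m = 1.
Proof.
rewrite /ghost big_ord_recl /= expn0 mul1r expr1n big1 ?addr0 // => i _.
by rewrite /W_one /= /Zp_cst expr0n expn_eq0 (gtn_eqF (prime_gt0 hp)) /= mulr0.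
Qed.

Lemma e_pow n : e n.+1 = P ^+ (p ^ n.+1 - 1). Proof. by []. Qed.

Lemma unit_x : W_is_unit p xW.
Proof.
exists bW; split.
  move=> i m; apply/modP; case: m => [|m]; first by rewrite expr0 dvd1z.
  apply: (@gh_inj (dw (beta m.+2)) (dw (beta m.+1)) m.+1) => // n.
  rewrite !gh_dw ?Dw_beta //.
  have -> : beta m.+2 n - beta m.+1 n = - (e n ^+ m.+2).
    by rewrite /beta (big_ord_recr m.+2) /=; ring.
  rewrite rpredN; case: n => [|n]; first by rewrite /= expr0n dvdz0.
  rewrite e_pow -exprM dvdz_exp2l //.
  have := pow_ge n; nia.
  exact: Dw_beta. exact: Dw_beta.
move=> n m; apply/modP; rewrite ghost_one /Zp_mul.
change (P ^+ m %| 1 - gh (dw u) n * gh (dw (beta m)) n)%Z.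
rewrite !gh_dw ?Dw_beta ?Dw_u //.
have -> : 1 - u n * beta m n = e n ^+ m.+1.
  by rewrite /u /beta mulrN -subrX1; ring.
case: n => [|n]; first by rewrite /= expr0n dvdz0.
rewrite e_pow -exprM dvdz_exp2l //.
have := pow_ge n; nia.
exact: Dw_beta. exact: Dw_u.
Qed.

Lemma frob_xy : W_is_frob p xW yW.
Proof.
move=> n m; apply/modP.
change (P ^+ m %| gh (dw v) n - gh (dw u) n.+1)%Z.
by rewrite (gh_dw Dw_v) (gh_dw Dw_u) /v subrr dvdz0.
Qed.

Lemma ghost_Vy n m : ghost p n (verschiebung yW) m = P ^+ (p ^ n) - P.
Proof.
case: n => [|n].
  by rewrite /ghost big_ord1 /= expn0 expr1 /Zp_cst mulr0 subrr.
rewrite /ghost big_ord_recl /= /Zp_cst expr0n expn_eq0 (gtn_eqF (prime_gt0 hp)) /= mulr0 add0r.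
have -> : \sum_(i < n.+1) (p ^ bump 0 i)%N%:Z *
    verschiebung yW (lift ord0 i) m ^+ (p ^ (n.+1 - bump 0 i)) = P * gh (dw v) n.
  rewrite /gh mulr_sumr; apply: eq_bigr => i _.
  by rewrite /bump /= add1n subSS expnS PoszM mulrA.
rewrite (gh_dw Dw_v) /v /u e_pow mulrBr mulr1 -exprS subn1 prednK //.
by rewrite expn_gt0 prime_gt0.
Qed.

Lemma coh_iter (x : nat -> int) : Zp_coh p x -> forall k j, (P ^+ k %| x (k + j)%N - x k)%Z.
Proof.
move=> hx k; elim=> [|j IH]; first by rewrite addn0 subrr dvdz0.
have -> : x (k + j.+1)%N - x k = (x (k + j).+1 - x (k + j)%N) + (x (k + j)%N - x k).
  by rewrite addnS; ring.
rewrite rpredD //; apply: dvdz_trans (_ : P ^+ (k + j) %| _)%Z.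
  exact: dvdz_exp2l (leq_addr _ _).
by apply/modP; apply: hx.
Qed.

Lemma dvd_subX (X Y : int) q : (X - Y %| X ^+ q - Y ^+ q)%Z.
Proof. by rewrite subrXX dvdz_mulr. Qed.

Lemma W_inj a b : W_wf p a -> W_wf p b ->
  (forall n m, (P ^+ m %| ghost p n a m - ghost p n b m)%Z) -> W_eq p a b.
Proof.
move=> ha hb h.
have key : forall n k, (P ^+ k %| a n (k + n)%N - b n (k + n)%N)%Z.
  elim/ltn_ind => n IH k.
  rewrite -(@dvdz_mul2l (P ^+ n)) ?pX_neq0 // -exprD (addnC n k) mulrBr.
  set K := (k + n)%N.
  have := h n K.
  change ((P ^+ K %| gh (fun i => a i K) n - gh (fun i => b i K) n)%Z ->
    (P ^+ K %| P ^+ n * a n K - P ^+ n * b n K)%Z).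
  rewrite !gh_split => hK.
  have -> : P ^+ n * a n K - P ^+ n * b n K =
     ((\sum_(i < n) P ^+ i * a i K ^+ (p ^ (n - i)) + P ^+ n * a n K) -
      (\sum_(i < n) P ^+ i * b i K ^+ (p ^ (n - i)) + P ^+ n * b n K))
     - \sum_(i < n) P ^+ i * (a i K ^+ (p ^ (n - i)) - b i K ^+ (p ^ (n - i))).
    have -> : \sum_(i < n) P ^+ i * (a i K ^+ (p ^ (n - i)) - b i K ^+ (p ^ (n - i))) =
     \sum_(i < n) P ^+ i * a i K ^+ (p ^ (n - i)) - \sum_(i < n) P ^+ i * b i K ^+ (p ^ (n - i)).
      by rewrite -sumrB; apply: eq_bigr => i _; rewrite mulrBr.
    ring.
  rewrite rpredB //; apply: rpred_sum => i _.
  have hiK : (i <= K)%N by rewrite /K; have := ltn_ord i; lia.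
  have -> : P ^+ K = P ^+ i * P ^+ (K - i) by rewrite -exprD subnKC.
  rewrite dvdz_mul2l ?pX_neq0 //; apply: dvdz_trans (dvd_subX _ _ _).
  by have := IH i (ltn_ord i) (K - i)%N; rewrite subnK.
move=> i m; apply/modP.
have -> : a i m - b i m = - (a i (m + i)%N - a i m) + (a i (m + i)%N - b i (m + i)%N)
   + (b i (m + i)%N - b i m) by ring.
rewrite rpredD ?(coh_iter (hb i)) // rpredD ?key // rpredN; exact: (coh_iter (ha i)).
Qed.

Definition psP (Q : {poly int}) : PS := fun k _ => Q`_k.

Lemma wf_const (f : PS) : (forall k m, f k m = f k 0%N) -> PS_wf p f.
Proof. by move=> h k n; rewrite (h k n.+1) (h k n). Qed.

Lemma wf_psP Q : PS_wf p (psP Q).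
Proof. exact: wf_const. Qed.

Lemma PS_exp_psP Q n k m : PS_exp (psP Q) n k m = (Q ^+ n)`_k.
Proof.
elim: n k => [|n IH] k.
  by rewrite expr0 coef1 /PS_exp /= /PS_one /Zp_cst; case: (k == 0%N).
rewrite /PS_exp iterS -/(PS_exp (psP Q) n) /PS_mul exprS coefM.
by apply: eq_bigr => i _; rewrite IH.
Qed.

Lemma sum_mod n (F G : 'I_n -> int) d :
  (forall i, (F i = G i %[mod d])%Z) -> (\sum_(i < n) F i = \sum_(i < n) G i %[mod d])%Z.
Proof.
move=> h; elim/big_ind2: _ => // x1 x2 y1 y2 h1 h2.
by rewrite -modzDm h1 h2 modzDm.
Qed.

Lemma ghost_W_eq a b : W_eq p a b -> forall n m,
  (P ^+ m %| ghost p n a m - ghost p n b m)%Z.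
Proof.
move=> h n m; apply/modP; apply: sum_mod => i.
by rewrite -modzMmr -modzXm (h i m) modzXm modzMmr.
Qed.

Lemma Xph_coef k : ('X + P%:P : {poly int})`_k =
   (if k == 1%N then 1 else 0) + (if k == 0%N then P else 0).
Proof. by rewrite coefD coefX coefC; case: (k == 1%N). Qed.

Lemma delta_h k m :
  (P ^+ m %| PS_frob p (psP ('X + P%:P)) k m - PS_exp (psP ('X + P%:P)) p k m)%Z.
Proof.
rewrite PS_exp_psP /PS_frob /psP.
case: m => [|m]; first by rewrite expr0 dvd1z.
case: (posnP (k + m)) => [hkm|hkm].
  have k0 : k = 0%N by lia.
  have m0 : m = 0%N by lia.
  subst k m; rewrite addn1 big_ord1 /= expr0 coef1 /= mulr1 Xph_coef /= add0r.
  rewrite -horner_coef0 hornerE /= hornerD hornerX hornerC add0r expr1.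
  by rewrite rpredB // dvdz_exp // prime_gt0.
have [N hN] : exists N, (k + m.+1 = N.+2)%N by exists (k + m).-1; lia.
rewrite hN !big_ord_recl /= big1 ?addr0; last first.
  by move=> i _; rewrite Xph_coef /= mul0r.
rewrite !Xph_coef /= expr0 expr1 /frob_poly coefB coef1 coefC add0r mul1r.
by case: (k == 0%N); rewrite /= ?mulr1 ?mulr0 ?subr0 ?add0r; rewrite [X in (_ %| X)%Z](_ : _ = 0) ?dvdz0 //; ring.
Qed.

Variable iota : PS -> Witt.
Hypothesis hiota : is_delta_map_lifting p iota.

Lemma iota_ext f g : PS_wf p f -> PS_wf p g -> (forall k m, f k m = g k m) ->
  W_eq p (iota f) (iota g).
Proof.
case: hiota => _ [heq _] hf hg h; apply: heq => // k m; by rewrite h.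
Qed.

Lemma G_add f g n m : PS_wf p f -> PS_wf p g ->
  (P ^+ m %| ghost p n (iota (PS_add f g)) m -
     (ghost p n (iota f) m + ghost p n (iota g) m))%Z.
Proof.
case: hiota => _ [_ [hadd _]] hf hg; exact/modP/(hadd f g hf hg n m).
Qed.

Lemma wf_add f g : (forall k m, f k m = f k 0%N) -> (forall k m, g k m = g k 0%N) ->
  PS_wf p (PS_add f g).
Proof. by move=> hf hg; apply: wf_const => k m; rewrite /PS_add /Defs.Zp_add (hf k m) (hg k m). Qed.

Lemma G0 n m : (P ^+ m %| ghost p n (iota (psP 0)) m)%Z.
Proof.
have h1 := G_add n m (wf_psP 0) (wf_psP 0).
have e : forall k m, PS_add (psP 0) (psP 0) k m = psP 0 k m.
  by move=> k m'; rewrite /PS_add /Defs.Zp_add /psP coef0 addr0.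
have h2 := ghost_W_eq (@iota_ext (PS_add (psP 0) (psP 0)) (psP 0)
   (@wf_add (psP 0) (psP 0) (fun _ _ => erefl) (fun _ _ => erefl)) (wf_psP 0) e) n m.
set A := ghost p n (iota (PS_add _ _)) m in h1 h2.
set B := ghost p n (iota (psP 0)) m in h1 h2 *.
have -> : B = - (A - (B + B)) + (A - B) by ring.
by rewrite rpredD ?rpredN.
Qed.

Lemma wf_one : PS_wf p PS_one.
Proof. exact: wf_const. Qed.

Lemma G1 n m : (P ^+ m %| ghost p n (iota PS_one) m - 1)%Z.
Proof.
case: hiota => _ [_ [_ [_ [hone _]]]].
by have := ghost_W_eq hone n m; rewrite ghost_one.
Qed.

Lemma Gc (c : nat) n m : (P ^+ m %| ghost p n (iota (psP (c%:Z)%:P)) m - c%:Z)%Z.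
Proof.
elim: c => [|c IH]; first by rewrite polyC0 subr0 G0.
have h1 := G_add n m (wf_psP (c%:Z)%:P) wf_one.
have e : forall k m, PS_add (psP (c%:Z)%:P) PS_one k m = psP (c.+1%:Z)%:P k m.
  move=> k m'; rewrite /PS_add /Defs.Zp_add /psP /PS_one /Zp_cst !coefC.
  by case: (k == 0%N); rewrite ?addr0 // intS addrC.
have h2 := ghost_W_eq (@iota_ext (PS_add (psP (c%:Z)%:P) PS_one) (psP (c.+1%:Z)%:P)
   (@wf_add (psP (c%:Z)%:P) PS_one (fun _ _ => erefl) (fun _ _ => erefl)) (wf_psP _) e) n m.
have h3 := G1 n m.
set A := ghost p n (iota (PS_add _ _)) m in h1 h2.
set B := ghost p n (iota (psP (c%:Z)%:P)) m in h1 IH.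
set C := ghost p n (iota PS_one) m in h1 h3.
set D := ghost p n (iota (psP (c.+1%:Z)%:P)) m in h2 *.
have -> : D - c.+1%:Z = - (A - D) + (A - (B + C)) + (B - c%:Z) + (C - 1).
  by rewrite intS; ring.
by rewrite rpredD // rpredD // rpredD // rpredN.
Qed.

Definition hPS := psP ('X + P%:P).

Lemma Gh n m : (P ^+ m %| ghost p n (iota hPS) m - P ^+ (p ^ n))%Z.
Proof.
case: hiota => _ [_ [_ [_ [_ [hdel h0]]]]].
elim: n m => [|n IH] m.
  rewrite /ghost big_ord1 /= expn0 mul1r !expr1.
  have := h0 hPS (wf_psP _) m; move/modP.
  by rewrite /hPS /psP Xph_coef /= add0r.
have hd : PS_is_delta p hPS (psP 0).
  move=> k m'; apply/modP; rewrite /Defs.Zp_mul /Defs.Zp_add /Defs.Zp_opp /Zp_cst /psP.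
  by rewrite coef0 mulr0 sub0r rpredN; exact: delta_h.
have := hdel _ _ (wf_psP _) (wf_psP _) hd n m; move/modP.
rewrite /Defs.Zp_mul /Defs.Zp_add /Defs.Zp_opp /Defs.Zp_exp /Zp_cst => h1.
have h2 := G0 n m.
have h3 : (P ^+ m %| ghost p n (iota hPS) m ^+ p - P ^+ (p ^ n.+1))%Z.
  by rewrite expnSr exprM; apply: dvdz_trans (dvd_subX _ _ _).
set A := ghost p n.+1 (iota hPS) m in h1 *.
set B := ghost p n (iota hPS) m in h1 h3.
set C := ghost p n (iota (psP 0)) m in h1 h2.
have -> : A - P ^+ (p ^ n.+1) = - (P * C - (A + - B ^+ p)) + P * C + (B ^+ p - P ^+ (p ^ n.+1)).
  by ring.
by rewrite rpredD // rpredD // ?rpredN // dvdz_mull.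
Qed.

Lemma wf_lambda : PS_wf p PS_lambda.
Proof. exact: wf_const. Qed.

Lemma GL n m : (P ^+ m %| ghost p n (iota PS_lambda) m - (P ^+ (p ^ n) - P))%Z.
Proof.
have h1 := G_add n m wf_lambda (wf_psP (P)%:P).
have e : forall k m, PS_add PS_lambda (psP P%:P) k m = hPS k m.
  by move=> k m0; rewrite /PS_add /Defs.Zp_add /hPS /PS_lambda /Zp_cst /psP Xph_coef coefC.
have h2 := ghost_W_eq (@iota_ext (PS_add PS_lambda (psP P%:P)) hPS
   (@wf_add PS_lambda (psP P%:P) (fun _ _ => erefl) (fun _ _ => erefl)) (wf_psP _) e) n m.
have h3 := Gc p n m.
have h4 := Gh n m.
set A := ghost p n (iota (PS_add _ _)) m in h1 h2.
set B := ghost p n (iota PS_lambda) m in h1 *.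
set C := ghost p n (iota (psP P%:P)) m in h1 h3.
set D := ghost p n (iota hPS) m in h2 h4.
have -> : B - (P ^+ (p ^ n) - P) = - (A - (B + C)) + (A - D) + (D - P ^+ (p ^ n)) - (C - P).
  by ring.
by rewrite rpredB // rpredD // rpredD // rpredN.
Qed.
End NT.

Theorem lemma6p14 (p : nat) (iota : PS -> Witt)
  (hp : prime p) (hp3 : (2 < p)%N) (hiota : is_delta_map_lifting p iota) :
  exists x y : Witt,
    [/\ W_wf p x, W_wf p y, W_is_unit p x, W_is_frob p x y &
        W_eq p (iota PS_lambda) (verschiebung y)].
Proof.
exists (xW p), (yW p); split.
- exact: wf_cst.
- exact: wf_cst.
- exact: unit_x.
- exact: frob_xy.
- case: (hiota) => hwf _.
  apply: W_inj => //; first exact: hwf (wf_lambda p).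
  + by case=> [|i] n.
  + move=> n m; rewrite ghost_Vy //; exact: GL.
Qed.
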